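(* Let $p$ be prime, $n\ge2$, and $G$ a profinite group. Then $$\bigcap_{s=1}^{n}T^{\bar{\mathbb{U}}_{n,s}}(G)=\bigcap_{s=1}^{n-1}T^{\mathbb{U}_{n-1,s}}(G).$$
   Context: For profinite groups $\mathbb{U}$ and $G$, $T^{\mathbb{U}}(G)$ denotes the intersection of the kernels of all continuous homomorphisms $G\to\mathbb{U}$. For a commutative ring $R$, $\mathbb{U}_s(R)$ is the group of unipotent upper-triangular $(s+1)\times(s+1)$ matrices over $R$. For $1\le s\le k$ put $\mathbb{U}_{k,s}=\mathbb{U}_s(\mathbb{Z}/p^{k-s+1})$, and let $\bar{\mathbb{U}}_{k,s}$ be the quotient of $\mathbb{U}_{k,s}$ by the central subgroup of order $p$ generated by $I+p^{k-s}E_{1,s+1}$. (E.g. $\mathbb{U}_{k,1}\cong\mathbb{Z}/p^k$, $\bar{\mathbb{U}}_{k,1}\cong\mathbb{Z}/p^{k-1}$, and $\mathbb{U}_{k,k}=\mathbb{U}_k(\mathbb{Z}/p)$.) *)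

(* Defs.v *)
From HB Require Import structures.
From mathcomp Require Import all_boot all_order all_algebra all_fingroup.
From mathcomp Require Import all_classical topology.
Set Implicit Arguments. Unset Strict Implicit. Unset Printing Implicit Defensive.
Import GRing.Theory.


Local Open Scope ring_scope.

Definition is_profinite_group (G : topologicalType)
    (mul : G -> G -> G) (inv : G -> G) (e : G) : Prop :=
  (forall x y z, mul x (mul y z) = mul (mul x y) z) /\
  (forall x, mul e x = x /\ mul x e = x) /\
  (forall x, mul (inv x) x = e /\ mul x (inv x) = e) /\
  continuous (fun xy : G * G => mul xy.1 xy.2) /\ continuous inv /\
  compact [set: G]%classic /\ hausdorff_space G /\
  totally_disconnected [set: G]%classic.

(* A continuous homomorphism from G into the finite group A (a subgroup of the
   finGroupType gT, carrying the discrete topology): multiplicative, values in A,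
   and preimages of points are open (= continuity into a discrete space). *)
Definition cont_hom (G : topologicalType) (mul : G -> G -> G)
    (gT : finGroupType) (A : {set gT}) (f : G -> gT) : Prop :=
  [/\ (forall x y, f (mul x y) = (f x * f y)%g),
      (forall x, f x \in A)
    & (forall u : gT, open (f @^-1` [set u])%classic)].

Definition Tker (G : topologicalType) (mul : G -> G -> G)
    (gT : finGroupType) (A : {set gT}) : set G :=
  [set x | forall f : G -> gT, cont_hom mul A f -> f x = 1%g]%classic.

(* U_s(Z/m) inside GL_{s+1}(Z/m): unipotent upper-triangular matrices. *)
Definition Unip (m s : nat) : {set {'GL_(s.+1)['Z_m]}} :=
  [set u : {'GL_(s.+1)['Z_m]} |
     [forall i : 'I_(s.+1), forall j : 'I_(s.+1),
        (GLval u i j == (i == j)%:R) || (i < j)%N]].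

(* For U_{k,s} = U_s(Z/p^(k-s+1)). *)
Definition Ukmod (p k s : nat) : nat := p ^ (k - s + 1).

Definition Ugrp (p k s : nat) : {set {'GL_(s.+1)['Z_(Ukmod p k s)]}} :=
  Unip (Ukmod p k s) s.

Definition Zsub (p k s : nat) : {set {'GL_(s.+1)['Z_(Ukmod p k s)]}} :=
  (<<[set u : {'GL_(s.+1)['Z_(Ukmod p k s)]} |
      GLval u == 1%:M + ((p ^ (k - s))%:R *: delta_mx ord0 ord_max)]>>)%g.

Definition Ubargrp (p k s : nat) : {set coset_of (Zsub p k s)} :=
  (Ugrp p k s / Zsub p k s)%g.

(* Main.v *)
Require Import Defs.
From HB Require Import structures.
From mathcomp Require Import all_boot all_order all_algebra all_fingroup.
From mathcomp Require Import all_classical topology.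
From mathcomp Require Import all_solvable zify.
Set Implicit Arguments. Unset Strict Implicit. Unset Printing Implicit Defensive.
Import GRing.Theory.

Section Part_A.
Local Open Scope ring_scope.

Definition red a b (x : 'Z_a) : 'Z_b := (nat_of_ord x)%:R.

Section Red.
Variables (a b : nat) (a1 : (1 < a)%N) (b1 : (1 < b)%N) (ba : (b %| a)%N).

Lemma red_nat k : red b (k%:R : 'Z_a) = k%:R.
Proof. by apply: ord_inj; rewrite /red !val_Zp_nat // modn_dvdm. Qed.

Lemma ltZa (x : 'Z_a) : (nat_of_ord x < a)%N.
Proof. by rewrite -[X in (_ < X)%N](Zp_cast a1) ltn_ord. Qed.
Lemma Zanat (x : 'Z_a) : x = (nat_of_ord x)%:R.
Proof. by apply: ord_inj; rewrite val_Zp_nat // modn_small // ltZa. Qed.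
Lemma redD (x y : 'Z_a) : red b (x + y : 'Z_a) = red b x + red b y.
Proof. by rewrite [x]Zanat [y]Zanat -natrD !red_nat natrD. Qed.
Lemma redM (x y : 'Z_a) : red b (x * y : 'Z_a) = red b x * red b y.
Proof. by rewrite [x]Zanat [y]Zanat -natrM !red_nat natrM. Qed.
Lemma red0 : red b (0 : 'Z_a) = 0. Proof. by rewrite -(mulr0n 1) red_nat. Qed.
Lemma red1 : red b (1 : 'Z_a) = 1. Proof. by rewrite -(mulr1n 1) red_nat. Qed.
Lemma red_sum I (r : seq I) P (F : I -> 'Z_a) :
  red b (\sum_(i <- r | P i) F i) = \sum_(i <- r | P i) red b (F i).
Proof. exact: (big_morph _ redD red0). Qed.

Lemma mredM n (A B : 'M['Z_a]_n) : map_mx (red b) (A *m B) = map_mx (red b) A *m map_mx (red b) B.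
Proof. by apply/matrixP=> i j; rewrite !mxE red_sum; apply: eq_bigr => k _; rewrite !mxE redM. Qed.

Lemma red_inj (ab : a = b) : injective (red b : 'Z_a -> 'Z_b).
Proof.
move=> x y /(congr1 (@nat_of_ord _)); rewrite /red !val_Zp_nat // -ab !modn_small //.
  by move/ord_inj. 
all: by rewrite -[X in (_ < X)%N](Zp_cast a1) ltn_ord.
Qed.
End Red.

End Part_A.

Section Part_B.
Local Open Scope classical_set_scope.

Lemma cont_hom_comp (G : topologicalType) (mul : G -> G -> G) (gT hT : finGroupType)
  (A : {set gT}) (B : {set hT}) (phi : gT -> hT) (f : G -> gT) :
  {in A &, {morph phi : x y / (x * y)%g}} -> (forall a, a \in A -> phi a \in B) ->
  cont_hom mul A f -> cont_hom mul B (phi \o f).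
Proof.
move=> phiM phiA [fM fA fo]; split => [x y|x|u] /=.
- by rewrite fM phiM.
- exact: phiA.
have -> : (phi \o f) @^-1` [set u] = \bigcup_(a in phi @^-1` [set u]) f @^-1` [set a].
  apply/seteqP; split => x /=.
    by move=> h; exists (f x).
  by case=> a /= <- ->.
by apply: bigcup_open => a _; exact: fo.
Qed.

Lemma Tker_comp (G : topologicalType) (mul : G -> G -> G) (gT hT : finGroupType)
  (A : {set gT}) (B : {set hT}) (phi : gT -> hT) (f : G -> gT) x :
  {in A &, {morph phi : x y / (x * y)%g}} -> (forall a, a \in A -> phi a \in B) ->
  cont_hom mul A f -> Tker mul B x -> phi (f x) = 1%g.
Proof. move=> phiM phiA hf hx; exact: (hx (phi \o f) (cont_hom_comp phiM phiA hf)). Qed.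

End Part_B.

Section Part_C.
Local Open Scope ring_scope.

Definition unitri (R : nzRingType) k (M : 'M[R]_k) :=
  [forall i : 'I_k, forall j : 'I_k, (M i j == (i == j)%:R) || (i < j)%N].

Section Unitri.
Variable R : comUnitRingType.

Lemma unitriP k (M : 'M[R]_k) :
  reflect (forall i j : 'I_k, (j <= i)%N -> M i j = (i == j)%:R) (unitri M).
Proof.
apply: (iffP forallP) => [h i j ji|h i]; last first.
  apply/forallP => j; case: (leqP j i) => ji; last by rewrite orbT.
  by rewrite h // eqxx.
by have /forallP/(_ j) := h i; rewrite ltnNge ji orbF => /eqP.
Qed.

Lemma unitri_unit k (M : 'M[R]_k) : unitri M -> M \in unitmx.
Proof.
move/unitriP=> h; rewrite unitmxE -det_tr det_trig.
  by rewrite big1 ?unitr1 // => i _; rewrite mxE h // eqxx.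
by apply/is_trig_mxP => i j ij; rewrite mxE h ?(ltnW ij) //; case: eqP => // ji; move: ij; rewrite ji ltnn.
Qed.
Lemma ord_neq k (i l : 'I_k) : (l < i)%N -> (i == l) = false.
Proof. by move=> h; apply/negbTE; apply/eqP => e; move: h; rewrite e ltnn. Qed.
Lemma ord_neq' k (i l : 'I_k) : (l < i)%N -> (l == i) = false.
Proof. by move=> h; rewrite eq_sym ord_neq. Qed.

Lemma unitri_mul k (M N : 'M[R]_k) : unitri M -> unitri N -> unitri (M *m N).
Proof.
move=> /unitriP hM /unitriP hN; apply/unitriP => i j ji; rewrite mxE (bigD1 i) //=.
rewrite big1 ?addr0 => [|l li]; first by rewrite hM // eqxx mul1r hN.
case: (ltnP l i) => il; first by rewrite hM ?(ltnW il) // ord_neq // mul0r.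
have il' : (i < l)%N.
  by rewrite ltn_neqAle il andbT; apply: contra li => /eqP/val_inj ->.
have jl := leq_ltn_trans ji il'.
by rewrite hN ?(ltnW jl) // ord_neq // mulr0.
Qed.
End Unitri.

Definition mkGL (R : finComUnitRingType) k (M : 'M[R]_k.+1) : {'GL_k.+1[R]} := insubd (1%g : {'GL_k.+1[R]}) M.

Lemma mkGLK (R : finComUnitRingType) k (M : 'M[R]_k.+1) : unitri M -> GLval (mkGL M) = M.
Proof. by move=> h; rewrite /mkGL insubdK //; exact: unitri_unit. Qed.

Lemma UnipE m s (u : {'GL_s.+1['Z_m]}) : (u \in Unip m s) = unitri (GLval u).
Proof. by rewrite inE. Qed.

Section GLmap.
Variables (R1 R2 : finComUnitRingType) (k1 k2 : nat)
  (F : 'M[R1]_k1.+1 -> 'M[R2]_k2.+1)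
  (Funi : forall M, unitri M -> unitri (F M))
  (FM : forall M N, unitri M -> unitri N -> F (M *m N) = F M *m F N).

Definition Phi (u : {'GL_k1.+1[R1]}) : {'GL_k2.+1[R2]} := mkGL (F (GLval u)).

Lemma PhiE u : unitri (GLval u) -> GLval (Phi u) = F (GLval u).
Proof. by move=> h; rewrite mkGLK // Funi. Qed.

Lemma Phi_uni u : unitri (GLval u) -> unitri (GLval (Phi u)).
Proof. by move=> h; rewrite PhiE // Funi. Qed.

Lemma PhiM u v : unitri (GLval u) -> unitri (GLval v) -> Phi (u * v)%g = (Phi u * Phi v)%g.
Proof.
move=> hu hv; apply: val_inj => /=.
rewrite /Phi GL_MxE FM // !mkGLK // ?Funi //; last by rewrite unitri_mul ?Funi.
by change (F u *m F v = GLval (mkGL (F u)) *m GLval (mkGL (F v))); rewrite !mkGLK ?Funi.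
Qed.
End GLmap.

End Part_C.

Section Part_D.
Local Open Scope ring_scope.

Lemma lift_leq n (h : 'I_n.+1) (i j : 'I_n) : (lift h i <= lift h j)%N = (i <= j)%N.
Proof. rewrite /= /bump; case: (leqP h i); case: (leqP h j) => *; lia. Qed.

Section Del.
Variable R : comUnitRingType.

Definition Dl k (h : 'I_k.+2) (M : 'M[R]_k.+2) : 'M[R]_k.+1 :=
  \matrix_(i, j) M (lift h i) (lift h j).

Lemma Dl_uni k h (M : 'M[R]_k.+2) : unitri M -> unitri (Dl h M).
Proof.
move/unitriP=> hM; apply/unitriP => i j ji; rewrite mxE hM ?lift_leq //.
by rewrite (inj_eq (@lift_inj _ h)).
Qed.

Lemma DlM k h (M N : 'M[R]_k.+2) : (h = ord0 \/ h = ord_max) ->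
  unitri M -> unitri N -> Dl h (M *m N) = Dl h M *m Dl h N.
Proof.
move=> hh /unitriP hM /unitriP hN; apply/matrixP => i j; rewrite !mxE.
rewrite (bigD1_ord h) //=.
have -> : M (lift h i) h * N h (lift h j) = 0.
  case: hh => ->.
    by rewrite hM // lift_eqF mul0r.
  rewrite (hN ord_max); last by rewrite lift_max; exact: ltnW (ltn_ord j).
  by rewrite eq_sym lift_eqF mulr0.
by rewrite add0r; apply: eq_bigr => l _; rewrite !mxE.
Qed.
Definition Emb k (M : 'M[R]_k.+1) : 'M[R]_k.+2 :=
  \matrix_(i, j) match unlift ord0 i, unlift ord0 j with
                 | Some i', Some j' => M i' j' | _, _ => (i == j)%:R end.

Lemma Emb_uni k (M : 'M[R]_k.+1) : unitri M -> unitri (Emb M).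
Proof.
move/unitriP=> hM; apply/unitriP => i j; rewrite mxE.
case: (unliftP ord0 i) => [i'|] ->; case: (unliftP ord0 j) => [j'|] -> // ji.
by rewrite hM ?(inj_eq (@lift_inj _ ord0)) // -(lift_leq ord0).
Qed.

Lemma EmbM k (M N : 'M[R]_k.+1) : Emb (M *m N) = Emb M *m Emb N.
Proof.
apply/matrixP => i j; rewrite !mxE (bigD1_ord ord0) //= !mxE !unlift_none.
case: (unliftP ord0 i) => [i'|] ->; case: (unliftP ord0 j) => [j'|] ->.
- rewrite lift_eqF mul0r add0r mxE; apply: eq_bigr => l _.
  by rewrite !mxE !liftK.
- rewrite lift_eqF mul0r add0r big1 // => l _; rewrite !mxE !liftK unlift_none.
  by rewrite lift_eqF mulr0.
- rewrite eq_sym lift_eqF mulr0 add0r big1 // => l _; rewrite !mxE liftK unlift_none.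
  by rewrite eq_sym lift_eqF mul0r.
- rewrite eqxx mulr1 big1 ?addr0 // => l _; rewrite !mxE liftK unlift_none.
  by rewrite eq_sym lift_eqF mul0r.
Qed.
End Del.

End Part_D.

Section Part_E.
Local Open Scope ring_scope.

Section Z.
Variables (R : finComUnitRingType) (s : nat) (c : R) (s0 : (0 < s)%N).
Let E : 'M[R]_s.+1 := delta_mx ord0 ord_max.
Let gM : 'M[R]_s.+1 := 1%:M + c *: E.

Lemma max_neq0 : (ord_max : 'I_s.+1) == ord0 = false.
Proof. by apply/negbTE; rewrite -val_eqE /= -lt0n. Qed.

Lemma E2 : E *m E = 0.
Proof. by rewrite /E mul_delta_mx_cond max_neq0. Qed.

Lemma gpow n : gM ^+ n = 1%:M + (c *+ n) *: E.
Proof.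
elim: n => [|n IH]; first by rewrite expr0 mulr0n scale0r addr0.
rewrite exprS IH /gM -mulmxE mulmxDl mul1mx mulmxDr mulmx1.
rewrite -scalemxAr -scalemxAl E2 !scaler0 addr0 mulrS scalerDl.
by rewrite -addrA [_ + c *: E]addrC.
Qed.

Lemma gE_uni d : unitri (1%:M + d *: E).
Proof.
apply/unitriP => i j ji; rewrite !mxE.
have /negbTE -> : ~~ ((i == ord0) && (j == ord_max)).
  apply/andP => -[/eqP ei /eqP ej]; move: ji; rewrite ei ej /=.
  by rewrite leqNgt s0.
by rewrite mulr0 addr0.
Qed.

Lemma g_comm (u : 'M[R]_s.+1) : unitri u -> gM *m u = u *m gM.
Proof.
move/unitriP=> hu; rewrite /gM mulmxDl mulmxDr mul1mx mulmx1 -scalemxAl -scalemxAr.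
congr (_ + c *: _); apply/matrixP => i j; rewrite /E !mxE.
rewrite (bigD1 ord_max) //= big1 ?addr0 => [|l lm]; last first.
  by rewrite !mxE (negbTE lm); case: (_ == _); rewrite /= mul0r.
rewrite (bigD1 ord0) //= big1 ?addr0 => [|l l0]; last first.
  by rewrite !mxE (negbTE l0); rewrite /= mulr0.
rewrite !mxE !eqxx !andbT.
rewrite hu; last exact: leq_ord.
by rewrite (hu i ord0) // /= [ord_max == j]eq_sym.
Qed.

Definition gG : {'GL_s.+1[R]} := mkGL gM.

Lemma gG_val : GLval gG = gM.
Proof. by rewrite mkGLK // gE_uni. Qed.

Lemma gGpow n : GLval (gG ^+ n)%g = gM ^+ n.
Proof.
elim: n => [|n IH]; first by rewrite expg0 expr0.
by rewrite expgS GL_ME IH gG_val exprS.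
Qed.

Lemma gen_set_eq : [set u : {'GL_s.+1[R]} | GLval u == gM] = [set gG].
Proof.
apply/setP => u; rewrite !inE; apply/eqP/eqP => [h|->]; last exact: gG_val.
by apply: val_inj; rewrite /= -/(GLval u) h -gG_val.
Qed.

Lemma in_cycleP (x : {'GL_s.+1[R]}) :
  x \in <[gG]>%g -> exists n, GLval x = 1%:M + (c *+ n) *: E.
Proof. by case/cycleP => n ->; exists n; rewrite gGpow gpow. Qed.

Lemma in_cycleI (x : {'GL_s.+1[R]}) n :
  GLval x = 1%:M + (c *+ n) *: E -> x \in <[gG]>%g.
Proof.
move=> h; apply/cycleP; exists n; apply: val_inj.
by rewrite /= -/(GLval x) h -gpow -gGpow.
Qed.

Lemma cycle_norm (A : {set {'GL_s.+1[R]}}) :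
  (forall u, u \in A -> unitri (GLval u)) -> A \subset 'N(<[gG]>)%g.
Proof.
move=> hA; apply: fintype.subset_trans (cent_sub _); rewrite cent_cycle.
apply/fintype.subsetP => u uA; apply/cent1P; apply: val_inj.
change (GLval (u * gG)%g = GLval (gG * u)%g).
by rewrite !GL_MxE gG_val g_comm // hA.
Qed.
End Z.

End Part_E.

Section Part_F.
Local Open Scope group_scope.

Section Quo.
Variables (gT hT : finGroupType) (H : {group gT}) (A : {set gT}) (B : {set hT})
  (psi : gT -> hT).
Hypotheses (sHA : H \subset A) (nHA : A \subset 'N(H))
  (AM : {in A &, forall x y, x * y \in A})
  (psiM : {in A &, {morph psi : x y / x * y}})
  (psiH : {in H, forall h, psi h = 1}).

Definition chi (c : coset_of H) := psi (repr c).

Lemma chiE u : u \in A -> chi (coset H u) = psi u.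
Proof.
move=> uA; have uN := fintype.subsetP nHA u uA.
have : repr (coset H u) \in H :* u by rewrite -val_coset // mem_repr_coset.
case/rcosetP => h hH e; rewrite /chi e psiM ?(fintype.subsetP sHA h hH) //.
by rewrite psiH // mul1g.
Qed.

Lemma chiM : {in A / H &, {morph chi : x y / x * y}}.
Proof.
move=> _ _ /morphimP[u uN uA ->] /morphimP[v vN vA ->].
by rewrite -morphM // !chiE ?psiM // AM.
Qed.

Lemma chiB (B' : {set hT}) : {in A, forall a, psi a \in B'} -> {in A / H, forall c, chi c \in B'}.
Proof. by move=> hB _ /morphimP[u uN uA ->]; rewrite chiE // hB. Qed.

Lemma chi_inj : (forall u, u \in A -> psi u = 1 -> u \in H) ->
  {in A / H, forall c, chi c = 1 -> c = 1}.
Proof.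
move=> hinj _ /morphimP[u uN uA ->]; rewrite chiE // => /(hinj _ uA) uH.
exact: coset_id.
Qed.
End Quo.

End Part_F.

Section Part_G.
Local Open Scope ring_scope.


Canonical Zsub_group p k s := [group of Zsub p k s].

Lemma Ukmod_gt1 p k s : prime p -> (1 < Ukmod p k s)%N.
Proof. by move=> hp; rewrite /Ukmod -{1}(expn0 p) ltn_exp2l ?prime_gt1 // addn1. Qed.

Lemma mred_uni a b (a1 : (1 < a)%N) (b1 : (1 < b)%N) (ba : (b %| a)%N) k (M : 'M['Z_a]_k) :
  unitri M -> unitri (map_mx (red b) M).
Proof.
move/unitriP=> h; apply/unitriP => i j ji; rewrite mxE h //.
by rewrite red_nat.
Qed.

Lemma Zsub_cycle p k s : (0 < s)%N ->
  Zsub p k s = <[gG s ((p ^ (k - s))%:R : 'Z_(Ukmod p k s))]>%g.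
Proof. by move=> s0; rewrite /Zsub gen_set_eq. Qed.

Lemma Ugrp_norm p k s : (0 < s)%N -> Ugrp p k s \subset 'N(Zsub p k s)%g.
Proof. by move=> s0; rewrite Zsub_cycle // cycle_norm // => u; rewrite /Ugrp UnipE. Qed.

Lemma Zsub_sub p k s : (0 < s)%N -> Zsub p k s \subset Ugrp p k s.
Proof.
move=> s0; apply/fintype.subsetP => u; rewrite Zsub_cycle // => /in_cycleP [] // m hm.
by rewrite /Ugrp UnipE hm gE_uni.
Qed.

Lemma dir1 (G : topologicalType) (mul : G -> G -> G) p n s (x : G) :
  prime p -> (1 <= s)%N -> (s <= n.-1)%N ->
  Tker mul (Ubargrp p n s.+1) x -> Tker mul (Ugrp p n.-1 s) x.
Proof.
move=> hp s1 sn hx f hf.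
have ab : Ukmod p n.-1 s = Ukmod p n s.+1.
  by rewrite /Ukmod (_ : (n.-1 - s + 1 = n - s.+1 + 1)%N) //; lia.
have a1 := Ukmod_gt1 n.-1 s hp; have b1 := Ukmod_gt1 n s.+1 hp.
have ba : (Ukmod p n s.+1 %| Ukmod p n.-1 s)%N by rewrite ab.
pose F1 (M : 'M['Z_(Ukmod p n.-1 s)]_s.+1) : 'M['Z_(Ukmod p n s.+1)]_(s.+2) :=
  Emb (map_mx (red (Ukmod p n s.+1)) M).
have F1uni : forall M, unitri M -> unitri (F1 M).
  by move=> M hM; apply: Emb_uni; apply: mred_uni.
have F1M : forall M N, unitri M -> unitri N -> F1 (M *m N) = F1 M *m F1 N.
  by move=> M N _ _; rewrite /F1 mredM // EmbM.
pose phi u := coset (Zsub p n s.+1) (Phi F1 u).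
have PhiU : forall u, u \in Ugrp p n.-1 s -> Phi F1 u \in Ugrp p n s.+1.
  by move=> u; rewrite /Ugrp !UnipE; apply: Phi_uni.
have nZ := Ugrp_norm p n (ltn0Sn s).
have phiM : {in Ugrp p n.-1 s &, {morph phi : y z / (y * z)%g}}.
  move=> u v hu hv; rewrite /phi PhiM -?UnipE // morphM //;
  by apply: (fintype.subsetP nZ); apply: PhiU.
have phiA : forall a, a \in Ugrp p n.-1 s -> phi a \in Ubargrp p n s.+1.
  move=> u hu; rewrite /Ubargrp; apply/morphimP; exists (Phi F1 u) => //.
    by apply: (fintype.subsetP nZ); apply: PhiU.
  by apply: PhiU.
have := Tker_comp phiM phiA hf hx.
case: hf => _ fA _; have uA := fA x; move: uA; set u := f x => uA.
move/coset_idr; rewrite (fintype.subsetP nZ) ?PhiU // => /(_ isT).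
move=> hZ; have : Phi F1 u \in Zsub p n s.+1 := hZ.
rewrite Zsub_cycle // => /in_cycleP [] // m hm.
apply: val_inj; apply/matrixP => i j.
have := congr1 (fun M : 'M['Z_(Ukmod p n s.+1)]_(s.+2) => M (lift ord0 i) (lift ord0 j)) hm.
rewrite PhiE -?UnipE // /F1 !mxE !liftK ?mxE lift_eqF mulr0 addr0.
rewrite (inj_eq (@lift_inj _ ord0)) -[X in _ = X](red_nat _ _ ba) //.
by move/(red_inj a1 b1 ab) => ->.
Qed.

End Part_G.

Section Part_H.
Local Open Scope ring_scope.

Section Dir2.
Variables (p n t : nat) (hp : prime p) (tn : (t.+1 <= n)%N).
Local Notation b := (Ukmod p n t.+1).
Local Notation e := (n - t.+1)%N.

Lemma b_eq : Ukmod p n.-1 t = b.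
Proof. by rewrite /Ukmod (_ : (n.-1 - t + 1 = n - t.+1 + 1)%N) //; lia. Qed.

Lemma r_eq : (t.+1 <= n.-1)%N -> Ukmod p n.-1 t.+1 = (p ^ e)%N.
Proof. by move=> h; rewrite /Ukmod (_ : (n.-1 - t.+1 + 1 = n - t.+1)%N) //; lia. Qed.

Lemma b_gt1 : (1 < b)%N. Proof. exact: Ukmod_gt1. Qed.

Lemma pe_dvd_b : ((p ^ e)%N %| b)%N.
Proof. by rewrite /Ukmod dvdn_exp2l // leq_addr. Qed.

Lemma redZ (c : nat) (x : 'Z_b) (m : nat) (c1 : (1 < c)%N) (cd : (c %| b)%N) (ce : (c %| (p ^ e)%N)%N) :
  red c (((((p ^ e)%N)%:R : 'Z_b) *+ m) * x) = 0.
Proof.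
have -> : (((p ^ e)%N)%:R : 'Z_b) *+ m = ((p ^ e * m)%N)%:R by rewrite natrM mulr_natr.
rewrite (redM b_gt1 c1 cd) (red_nat b_gt1 c1 cd).
have -> : ((p ^ e * m)%N%:R : 'Z_c) = 0.
  by apply: ord_inj; rewrite val_Zp_nat // (eqP (dvdn_mulr _ ce)).
by rewrite mul0r.
Qed.

Definition dd (m : nat) : 'Z_b := (((p ^ e)%N)%:R : 'Z_b) *+ m.
Definition EE : 'M['Z_b]_(t.+2) := delta_mx ord0 ord_max.

Lemma c_gt1 : (1 < Ukmod p n.-1 t)%N. Proof. exact: Ukmod_gt1. Qed.
Lemma c_dvd : (Ukmod p n.-1 t %| b)%N. Proof. by rewrite b_eq. Qed.

Lemma FZr m : (t.+1 <= n.-1)%N ->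
  map_mx (red (Ukmod p n.-1 t.+1)) (1%:M + dd m *: EE) = 1%:M.
Proof.
move=> h; have r1 := Ukmod_gt1 n.-1 t.+1 hp.
have rd : (Ukmod p n.-1 t.+1 %| b)%N by rewrite r_eq // pe_dvd_b.
apply/matrixP => i j; rewrite !mxE (redD b_gt1 r1 rd) (redZ _ _ r1 rd); last by rewrite r_eq.
by rewrite addr0 (red_nat b_gt1 r1 rd).
Qed.

Lemma FZf m : Dl ord0 (map_mx (red (Ukmod p n.-1 t)) (1%:M + dd m *: EE)) = 1%:M.
Proof.
apply/matrixP => i j; rewrite !mxE (redD b_gt1 c_gt1 c_dvd) /EE lift_eqF mulr0.
rewrite (red0 b_gt1 c_gt1 c_dvd) addr0 (red_nat b_gt1 c_gt1 c_dvd).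
by rewrite (inj_eq (@lift_inj _ ord0)).
Qed.

Lemma FZl m : Dl ord_max (map_mx (red (Ukmod p n.-1 t)) (1%:M + dd m *: EE)) = 1%:M.
Proof.
apply/matrixP => i j; rewrite !mxE (redD b_gt1 c_gt1 c_dvd) /EE lift_eqF andbF mulr0.
rewrite (red0 b_gt1 c_gt1 c_dvd) addr0 (red_nat b_gt1 c_gt1 c_dvd).
by rewrite (inj_eq (@lift_inj _ ord_max)).
Qed.

Lemma dir2_map (R2 : finComUnitRingType) k2 (F : 'M['Z_b]_(t.+2) -> 'M[R2]_k2.+1)
  (Funi : forall M, unitri M -> unitri (F M))
  (FM : forall M N, unitri M -> unitri N -> F (M *m N) = F M *m F N)
  (FZ : forall m, F (1%:M + dd m *: EE) = 1%:M)
  (B' : {set {'GL_k2.+1[R2]}}) (hB : forall u, unitri (GLval u) -> Phi F u \in B')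
  (G : topologicalType) (mul : G -> G -> G) (x : G) (hx : Tker mul B' x)
  (f : G -> coset_of (Zsub p n t.+1)) (hf : cont_hom mul (Ubargrp p n t.+1) f)
  (u : {'GL_(t.+2)['Z_b]}) (uA : u \in Ugrp p n t.+1)
  (fxu : f x = coset (Zsub p n t.+1) u) :
  Phi F u = 1%g.
Proof.
have sHA : (Zsub_group p n t.+1 \subset Ugrp p n t.+1)%g := Zsub_sub p n (ltn0Sn t).
have nHA : (Ugrp p n t.+1 \subset 'N(Zsub_group p n t.+1))%g := Ugrp_norm p n (ltn0Sn t).
have AM : {in Ugrp p n t.+1 &, forall y z, (y * z)%g \in Ugrp p n t.+1}.
  by move=> y z; rewrite /Ugrp !UnipE GL_MxE; apply: unitri_mul.
have psiM : {in Ugrp p n t.+1 &, {morph Phi F : y z / (y * z)%g}}.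
  by move=> y z; rewrite /Ugrp !UnipE; apply: PhiM.
have psiH : {in Zsub_group p n t.+1, forall h, Phi F h = 1%g}.
  move=> h hZ; have : h \in Zsub p n t.+1 := hZ.
  rewrite Zsub_cycle // => /in_cycleP [] // m hm.
  apply: val_inj; change (GLval (Phi F h) = GLval 1%g); rewrite (PhiE Funi); last by rewrite hm gE_uni.
  by rewrite hm; have := FZ m; rewrite /dd /EE => ->.
have hB' : {in Ugrp p n t.+1, forall a, Phi F a \in B'}.
  by move=> a; rewrite /Ugrp UnipE; apply: hB.
have := Tker_comp (chiM sHA nHA AM psiM psiH) (chiB sHA nHA psiM psiH hB') hf hx.
by rewrite fxu (chiE sHA nHA psiM psiH uA).
Qed.

Lemma Dl_one h (u : 'M['Z_b]_(t.+2)) i' j' :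
  Dl h (map_mx (red (Ukmod p n.-1 t)) u) = 1%:M ->
  u (lift h i') (lift h j') = (lift h i' == lift h j')%:R.
Proof.
move/matrixP/(_ i' j'); rewrite !mxE (inj_eq (@lift_inj _ h)).
rewrite -(red_nat b_gt1 c_gt1 c_dvd).
by move/(red_inj b_gt1 c_gt1 (esym b_eq)).
Qed.

Lemma inj_mat (u : 'M['Z_b]_(t.+2)) : unitri u ->
  ((0 < t)%N -> Dl ord0 (map_mx (red (Ukmod p n.-1 t)) u) = 1%:M /\
              Dl ord_max (map_mx (red (Ukmod p n.-1 t)) u) = 1%:M) ->
  ((p ^ e)%N %| nat_of_ord (u ord0 ord_max))%N ->
  u = 1%:M + dd (nat_of_ord (u ord0 ord_max) %/ (p ^ e)%N) *: EE.
Proof.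
move=> /unitriP hu hD hdiv; apply/matrixP => i j; rewrite /EE !mxE.
case: (leqP j i) => ji.
  rewrite hu // (_ : (i == ord0) && (j == ord_max) = false) ?mulr0 ?addr0 //.
  by apply/negbTE/andP => -[/eqP ei /eqP ej]; move: ji; rewrite ei ej.
case: (boolP ((i == ord0) && (j == ord_max))) => [/andP [/eqP -> /eqP ->] | hc].
  rewrite eq_sym max_neq0 // add0r mulr1 /dd -[_ *+ (_ %/ _)]mulr_natr -natrM.
  by rewrite mulnC divnK // -Zanat //; exact: b_gt1.
rewrite mulr0 addr0.
have t0 : (0 < t)%N.
  rewrite lt0n; apply/eqP => t0; apply: (negP hc); apply/andP.
  have jl := ltn_ord j.
  by split; apply/eqP/val_inj => /=; lia.
have [hD0 hDm] := hD t0.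
case: (eqVneq i ord0) => [ei | ni].
  have nj : j != ord_max by apply: contra hc => ->; rewrite ei !eqxx.
  case: (unliftP ord_max i) => [i' ei'|ei']; last by move: ji; rewrite ei' leqNgt ltn_ord.
  case: (unliftP ord_max j) => [j' ej'|ej']; last by move: nj; rewrite ej' eqxx.
  by rewrite ei' ej' Dl_one.
case: (unliftP ord0 i) => [i' ei'|ei']; last by move: ni; rewrite ei' eqxx.
case: (unliftP ord0 j) => [j' ej'|ej']; last by move: ji; rewrite ej'.
by rewrite ei' ej' Dl_one.
Qed.
End Dir2.

Lemma dir2 (G : topologicalType) (mul : G -> G -> G) p n t (x : G) :
  prime p -> (2 <= n)%N -> (t.+1 <= n)%N ->
  (forall s, (1 <= s <= n.-1)%N -> Tker mul (Ugrp p n.-1 s) x) ->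
  Tker mul (Ubargrp p n t.+1) x.
Proof.
move=> hp n2 tn hx f hf.
have fA : f x \in Ubargrp p n t.+1 by case: hf.
move: fA; rewrite /Ubargrp => /morphimP [u uN uA fxu].
rewrite fxu; apply: coset_id.
have uU : unitri (GLval u) by rewrite -UnipE.
have b1 := b_gt1 n t hp; have c1 := c_gt1 n t hp; have cd : (Ukmod p n.-1 t %| Ukmod p n t.+1)%N by rewrite b_eq.
have hDel : (0 < t)%N ->
    Dl ord0 (map_mx (red (Ukmod p n.-1 t)) (GLval u)) = 1%:M /\
    Dl ord_max (map_mx (red (Ukmod p n.-1 t)) (GLval u)) = 1%:M.
  move=> t0; have ht : Tker mul (Ugrp p n.-1 t) x by apply: hx; rewrite t0 /=; lia.
  split.
  - pose F (M : 'M['Z_(Ukmod p n t.+1)]_(t.+2)) := Dl ord0 (map_mx (red (Ukmod p n.-1 t)) M).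
    have Funi : forall M, unitri M -> unitri (F M).
      by move=> M hM; apply: Dl_uni; apply: mred_uni.
    have FM : forall M N, unitri M -> unitri N -> F (M *m N) = F M *m F N.
      by move=> M N hM hN; rewrite /F mredM // DlM ?mred_uni //; left.
    have hB : forall v, unitri (GLval v) -> Phi F v \in Ugrp p n.-1 t.
      by move=> v hv; rewrite /Ugrp UnipE; apply: Phi_uni.
    have := dir2_map Funi FM (FZf hp tn) hB ht hf uA fxu.
    by move/(congr1 (@GLval _ _)); rewrite (PhiE Funi uU).
  - pose F (M : 'M['Z_(Ukmod p n t.+1)]_(t.+2)) := Dl ord_max (map_mx (red (Ukmod p n.-1 t)) M).
    have Funi : forall M, unitri M -> unitri (F M).
      by move=> M hM; apply: Dl_uni; apply: mred_uni.
    have FM : forall M N, unitri M -> unitri N -> F (M *m N) = F M *m F N.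
      by move=> M N hM hN; rewrite /F mredM // DlM ?mred_uni //; right.
    have hB : forall v, unitri (GLval v) -> Phi F v \in Ugrp p n.-1 t.
      by move=> v hv; rewrite /Ugrp UnipE; apply: Phi_uni.
    have := dir2_map Funi FM (FZl hp tn) hB ht hf uA fxu.
    by move/(congr1 (@GLval _ _)); rewrite (PhiE Funi uU).
have hdiv : ((p ^ (n - t.+1))%N %| nat_of_ord (GLval u ord0 ord_max))%N.
  case: (leqP t.+1 n.-1) => tn1; last first.
    by rewrite (_ : (n - t.+1 = 0)%N) ?expn0 ?dvd1n //; lia.
  have ht : Tker mul (Ugrp p n.-1 t.+1) x by apply: hx; rewrite tn1 /=.
  have r1 := Ukmod_gt1 n.-1 t.+1 hp.
  have rd : (Ukmod p n.-1 t.+1 %| Ukmod p n t.+1)%N by rewrite r_eq // pe_dvd_b.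
  pose F (M : 'M['Z_(Ukmod p n t.+1)]_(t.+2)) := map_mx (red (Ukmod p n.-1 t.+1)) M.
  have Funi : forall M, unitri M -> unitri (F M).
    by move=> M hM; apply: mred_uni.
  have FM : forall M N, unitri M -> unitri N -> F (M *m N) = F M *m F N.
    by move=> M N hM hN; rewrite /F mredM.
  have hB : forall v, unitri (GLval v) -> Phi F v \in Ugrp p n.-1 t.+1.
    by move=> v hv; rewrite /Ugrp UnipE; apply: Phi_uni.
  have := dir2_map Funi FM (fun m => FZr hp tn m tn1) hB ht hf uA fxu.
  move/(congr1 (@GLval _ _)); rewrite (PhiE Funi uU) => /matrixP /(_ ord0 ord_max).
  rewrite !mxE eq_sym max_neq0 //= => /(congr1 (@nat_of_ord _)).
  rewrite /red val_Zp_nat // -r_eq //.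
  by move/eqP; rewrite /dvdn.
have := inj_mat hp tn uU hDel hdiv => hu.
rewrite Zsub_cycle //; exact: (in_cycleI _ hu).
Qed.

End Part_H.

Local Open Scope classical_set_scope.

Theorem proposition10p1 (p n : nat) (hp : prime p) (hn : (2 <= n)%N)
    (G : topologicalType) (mul : G -> G -> G) (inv : G -> G) (e : G)
    (hG : is_profinite_group mul inv e) :
  [set x : G | forall s : nat, (1 <= s <= n)%N -> Tker mul (Ubargrp p n s) x] =
  [set x : G | forall s : nat, (1 <= s <= n.-1)%N -> Tker mul (Ugrp p n.-1 s) x].
Proof.
apply/seteqP; split => x /= hx s /andP [s1 sn].
- have sn2 : (s < n)%N by lia.
  by apply: dir1 hp s1 sn _; apply: hx; rewrite sn2.
- case: s s1 sn => [//|t] _ tn.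
  exact: dir2 hp hn tn hx.
Qed.
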